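(* There is a constant $c$ such that the following holds. Let $n\in\mathbb N$, $f:\mathbb B^n\to\mathbb B$, and let $X\in\mathrm{IS}_{br}$ compute $f$. Then there exists $Y\in\mathrm{IS}_{br}$ in which the basic instruction $\mathrm{out}.\mathrm{set}{:}F$ does not occur (in any plain, positive test or negative test instruction) such that $Y$ computes $f$ and $|Y|\le c\cdot|X|$.
   Context: $\mathbb B=\{T,F\}$. A primitive instruction is one of: a plain basic instruction $a$, a positive test instruction $+a$, a negative test instruction $-a$ (for a basic instruction $a$), a forward jump instruction $\#l$ ($l\in\mathbb N$), or the termination instruction $!$. An instruction sequence is a finite nonempty sequence $X=u_1;\dots;u_k$ of primitive instructions; its length is $|X|=k$. Basic instructions have the form $f.m$ where the focus $f$ is one of $\mathrm{in}{:}i$, $\mathrm{aux}{:}i$ ($i\ge 1$) or $\mathrm{out}$, each naming a Boolean register, and the method $m$ is one of $\mathrm{set}{:}T$, $\mathrm{set}{:}F$, $\mathrm{get}$. Executing $f.\mathrm{set}{:}b$ sets register $f$ to $b$ and yields reply $b$; executing $f.\mathrm{get}$ leaves the register unchanged and yields its content as reply. Execution of $X=u_1;\dots;u_k$: a counter starts at $1$. If the counter exceeds $k$, execution deadlocks. At position $i$: if $u_i=!$, execution terminates; if $u_i=\#l$, execution deadlocks if $l=0$ and otherwise the counter becomes $i+l$; if $u_i$ is $a$, $+a$ or $-a$, the basic instruction $a$ is executed yielding reply $r$, and the counter becomes $i+1$ for $u_i=a$; for $u_i=+a$ it becomes $i+1$ if $r=T$ and $i+2$ if $r=F$; for $u_i=-a$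 it becomes $i+1$ if $r=F$ and $i+2$ if $r=T$. $\mathrm{IS}_{br}$ is the set of instruction sequences in which every basic instruction occurring belongs to $\{f.\mathrm{get}: f=\mathrm{in}{:}i \text{ or } f=\mathrm{aux}{:}i\}\cup\{f.\mathrm{set}{:}b: f=\mathrm{aux}{:}i \text{ or } f=\mathrm{out},\ b\in\mathbb B\}$. $X\in\mathrm{IS}_{br}$ computes $f:\mathbb B^n\to\mathbb B$ if for every $(b_1,\dots,b_n)\in\mathbb B^n$: when $X$ is executed with register $\mathrm{in}{:}j$ initialised to $b_j$ ($j\le n$) and all registers $\mathrm{aux}{:}i$ and $\mathrm{out}$ initialised to $F$, execution terminates (does not deadlock) without ever executing a basic instruction with focus $\mathrm{in}{:}j$ for $j>n$, and at termination register $\mathrm{out}$ contains $f(b_1,\dots,b_n)$. *)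

(* Defs.v *)
From HB Require Import structures.
From mathcomp Require Import all_boot.
Set Implicit Arguments. Unset Strict Implicit. Unset Printing Implicit Defensive.

(* Foci: in:i, aux:i (i >= 1, enforced in IS_br), out. *)
Inductive focus := FIn of nat | FAux of nat | FOut.
Inductive method := MSet of bool | MGet.
Record basic := Basic { bfocus : focus; bmethod : method }.

Inductive instr :=
| IPlain of basic
| IPos of basic
| INeg of basic
| IJump of nat
| ITerm.

Definition focus_eqb (x y : focus) : bool :=
  match x, y with FIn i, FIn j => i == j | FAux i, FAux j => i == j
  | FOut, FOut => true | _, _ => false end.
Lemma focus_eqP : Equality.axiom focus_eqb.
Proof. case=> [i|i|] [j|j|] /=; try (by constructor; congruence);
  by apply: (iffP eqP) => [->|[]]. Qed.
HB.instance Definition _ := hasDecEq.Build focus focus_eqP.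
Definition method_eqb (x y : method) : bool :=
  match x, y with MSet a, MSet b => a == b | MGet, MGet => true | _, _ => false end.
Lemma method_eqP : Equality.axiom method_eqb.
Proof. case=> [a|] [b|] /=; try (by constructor; congruence);
  by apply: (iffP eqP) => [->|[]]. Qed.
HB.instance Definition _ := hasDecEq.Build method method_eqP.
Definition basic_eqb (x y : basic) : bool :=
  (bfocus x == bfocus y) && (bmethod x == bmethod y).
Lemma basic_eqP : Equality.axiom basic_eqb.
Proof. case=> f m [g k]; rewrite /basic_eqb /=;
  apply: (iffP andP) => [[/eqP-> /eqP->]|[-> ->]] //. Qed.
HB.instance Definition _ := hasDecEq.Build basic basic_eqP.
Definition instr_eqb (x y : instr) : bool :=
  match x, y with
  | IPlain a, IPlain b | IPos a, IPos b | INeg a, INeg b => a == b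
  | IJump l, IJump m => l == m | ITerm, ITerm => true | _, _ => false end.
Lemma instr_eqP : Equality.axiom instr_eqb.
Proof. case=> [a|a|a|l|] [b|b|b|m|] /=; try (by constructor; congruence);
  by apply: (iffP eqP) => [->|[]]. Qed.
HB.instance Definition _ := hasDecEq.Build instr instr_eqP.

Notation iseq := (seq instr).

Record regs := Regs { rin : nat -> bool; raux : nat -> bool; rout : bool }.

Definition read (s : regs) (f : focus) : bool :=
  match f with FIn i => rin s i | FAux i => raux s i | FOut => rout s end.

Definition write (s : regs) (f : focus) (b : bool) : regs :=
  match f with
  | FIn i => Regs (fun j => if j == i then b else rin s j) (raux s) (rout s)
  | FAux i => Regs (rin s) (fun j => if j == i then b else raux s j) (rout s)
  | FOut => Regs (rin s) (raux s) b
  end.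

Definition exec_basic (s : regs) (a : basic) : regs * bool :=
  match bmethod a with
  | MSet b => (write s (bfocus a) b, b)
  | MGet => (s, read s (bfocus a))
  end.

Definition br_basic (a : basic) : bool :=
  match bfocus a, bmethod a with
  | FIn i, MGet => 0 < i
  | FAux i, _ => 0 < i
  | FOut, MSet _ => true
  | _, _ => false
  end.

Definition instr_basic (u : instr) : option basic :=
  match u with IPlain a | IPos a | INeg a => Some a | _ => None end.

Definition IS_br (X : iseq) : Prop :=
  0 < size X /\ forall u, u \in X -> forall a, instr_basic u = Some a -> br_basic a.

Definition no_out_setF (X : iseq) : Prop :=
  forall u, u \in X -> instr_basic u <> Some (Basic FOut (MSet false)).

(* Outcome of a run. [Forbidden]: a basic instruction with focus in:j, j > n,
   was executed. [OutOfFuel]: step bound exhausted. *)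
Inductive outcome := Terminated of regs | Deadlock | Forbidden | OutOfFuel.

(* run with fuel; counter [pc] is 1-based *)
Fixpoint run (n : nat) (X : iseq) (fuel pc : nat) (s : regs) : outcome :=
  match fuel with
  | 0 => OutOfFuel
  | fuel'.+1 =>
    if (pc == 0) || (size X < pc) then Deadlock else
    let u := nth ITerm X pc.-1 in
    let step (a : basic) (k : bool -> nat) :=
      match bfocus a with
      | FIn j => if n < j then Forbidden
                 else let (s', r) := exec_basic s a in run n X fuel' (k r) s'
      | _ => let (s', r) := exec_basic s a in run n X fuel' (k r) s'
      end in
    match u with
    | ITerm => Terminated s
    | IJump l => if l == 0 then Deadlock else run n X fuel' (pc + l) s
    | IPlain a => step a (fun _ => pc.+1)
    | IPos a => step a (fun r => if r then pc.+1 else pc.+2)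
    | INeg a => step a (fun r => if r then pc.+2 else pc.+1)
    end
  end.

Definition init_regs (n : nat) (b : n.-tuple bool) : regs :=
  Regs (fun j => if (0 < j) && (j <= n) then nth false b j.-1 else false)
       (fun _ => false) false.

Definition computes (X : iseq) (n : nat) (f : n.-tuple bool -> bool) : Prop :=
  forall b : n.-tuple bool,
    exists fuel s, run n X fuel 1 (init_regs b) = Terminated s /\ rout s = f b.

(* Main.v *)
Require Import Defs.
From mathcomp Require Import all_boot.
From Stdlib Require Import Lia.
Ltac slia := repeat match goal with H : is_true (_ <= _) |- _ => move/leP: H => H end;
  try apply/leP; rewrite -?plusE -?multE -?minusE; lia.

Definition conv (k : nat) (a : basic) : basic :=
  Basic (match bfocus a with FOut => FAux k | f => f end) (bmethod a).

Definition block (k : nat) (u : instr) : iseq :=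
  match u with
  | IPlain a => [:: IPlain (conv k a); IJump 2; IJump 2]
  | IPos a => [:: IPos (conv k a); IJump 2; IJump 4]
  | INeg a => [:: INeg (conv k a); IJump 2; IJump 4]
  | IJump l => [:: IJump (3 * l); ITerm; ITerm]
  | ITerm => [:: IPos (Basic (FAux k) MGet); IPlain (Basic FOut (MSet true)); ITerm]
  end.

Definition trans k (X : iseq) : iseq := flatten [seq block k u | u <- X].

Lemma size_block k u : size (block k u) = 3. Proof. by case: u. Qed.

Lemma size_trans k X : size (trans k X) = 3 * size X.
Proof. elim: X => [|u X IH] //=; rewrite /trans /= size_cat size_block -/(trans k X) IH; slia. Qed.

Lemma nth_trans k X i r : i < size X -> r < 3 ->
  nth ITerm (trans k X) (3 * i + r) = nth ITerm (block k (nth ITerm X i)) r.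
Proof.
elim: X i => [|u X IH] [|i] //= Hi Hr.
  by rewrite /trans /= nth_cat size_block Hr.
rewrite /trans /= nth_cat size_block -/(trans k X).
have -> : (3 * i.+1 + r < 3) = false by apply/negbTE; rewrite -leqNgt; slia.
rewrite -IH //; congr nth; slia.
Qed.

Definition auxmax (X : iseq) : nat :=
  foldr maxn 0 [seq match instr_basic u with Some (Basic (FAux j) _) => j | _ => 0 end | u <- X].

Definition fresh k (X : iseq) := forall u, u \in X -> forall a, instr_basic u = Some a -> bfocus a <> FAux k.

Lemma auxmax_ge X u a j : u \in X -> instr_basic u = Some a -> bfocus a = FAux j -> j <= auxmax X.
Proof.
elim: X => [|v X IH] //; rewrite /auxmax /= -/(auxmax X) inE => /orP [/eqP ->|Hu] Ha Hf.
  rewrite Ha; move: Hf; clear IH Ha; case: a => f m /= ->; exact: leq_maxl.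
apply: leq_trans (IH Hu Ha Hf) _; exact: leq_maxr.
Qed.

Lemma fresh_auxmax X : fresh (auxmax X).+1 X.
Proof. move=> u Hu a Ha Hf; have := @auxmax_ge X u a _ Hu Ha Hf; by rewrite ltnn. Qed.

Definition Rel k s s' := rin s' = rin s /\ (forall j, j != k -> raux s' j = raux s j)
  /\ raux s' k = rout s /\ rout s' = false.

Lemma exec_sim k s s' a : Rel k s s' -> bfocus a <> FAux k ->
  (exec_basic s' (conv k a)).2 = (exec_basic s a).2 /\
  Rel k (exec_basic s a).1 (exec_basic s' (conv k a)).1.
Proof.
case: a => [[j|j|] [b|]] [H1 [H2 [H3 H4]]] Hf; rewrite /exec_basic /conv /=.
- by split=> //; rewrite /Rel /= H1.
- by rewrite H1.
- have Hj : j != k by apply/eqP=> E; apply: Hf; rewrite E.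
  split=> //; split=> //=; split; last split=> //.
  + by move=> j' Hj'; case: (j' == j) => //; apply: H2.
  + by rewrite eq_sym (negbTE Hj).
- have Hj : j != k by apply/eqP=> E; apply: Hf; rewrite E.
  by rewrite H2.
- split=> //; split=> //=; split; last split=> //.
  move=> j' Hj'; by rewrite (negbTE Hj') H2.
  by rewrite eqxx.
- by [].
Qed.

Definition forb n (a : basic) := match bfocus a with FIn j => n < j | _ => false end.

Lemma forb_conv n k a : forb n (conv k a) = forb n a.
Proof. by case: a => [[]]. Qed.

Definition stepr n X fuel (a : basic) (kk : bool -> nat) s :=
  if forb n a then Forbidden else run n X fuel (kk (exec_basic s a).2) (exec_basic s a).1.

Lemma run_S n X fuel pc s : run n X fuel.+1 pc s =
  if (pc == 0) || (size X < pc) then Deadlock else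
  match nth ITerm X pc.-1 with
  | ITerm => Terminated s
  | IJump l => if l == 0 then Deadlock else run n X fuel (pc + l) s
  | IPlain a => stepr n X fuel a (fun _ => pc.+1) s
  | IPos a => stepr n X fuel a (fun r => if r then pc.+1 else pc.+2) s
  | INeg a => stepr n X fuel a (fun r => if r then pc.+2 else pc.+1) s
  end.
Proof.
rewrite /=; case: ifP => // _.
case: (nth _ _ _) => // a; rewrite /stepr /forb; case: a => [[j|j|] m] /=;
  try (case: (n < j) => //); by case: (exec_basic _ _).
Qed.

Lemma sim n X k fuel : fresh k X -> forall i s s' t, Rel k s s' ->
  run n X fuel i.+1 s = Terminated t ->
  exists fuel' t', run n (trans k X) fuel' (3 * i).+1 s' = Terminated t' /\ rout t' = rout t.
Proof.
move=> Hfr; elim: fuel => [|fuel IH] i s s' t HR //.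
rewrite run_S /=; case: ltnP => // Hi.
have Hu : nth ITerm X i \in X by apply: mem_nth.
have Hn0 : nth ITerm (trans k X) (3 * i) = nth ITerm (block k (nth ITerm X i)) 0.
  by rewrite -nth_trans // addn0.
have Hn1 : nth ITerm (trans k X) (3 * i).+1 = nth ITerm (block k (nth ITerm X i)) 1.
  by rewrite -nth_trans // addn1.
have Hn2 : nth ITerm (trans k X) (3 * i).+2 = nth ITerm (block k (nth ITerm X i)) 2.
  by rewrite -nth_trans // addn2.
have Hb1 : ((3 * i).+1 == 0) || (size (trans k X) < (3 * i).+1) = false.
  by rewrite size_trans /=; apply/negbTE; rewrite -leqNgt; slia.
have Hb2 : ((3 * i).+2 == 0) || (size (trans k X) < (3 * i).+2) = false.
  by rewrite size_trans /=; apply/negbTE; rewrite -leqNgt; slia.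
have Hb3 : ((3 * i).+3 == 0) || (size (trans k X) < (3 * i).+3) = false.
  by rewrite size_trans /=; apply/negbTE; rewrite -leqNgt; slia.
move: Hu Hn0 Hn1 Hn2; case: (nth ITerm X i) => [a|a|a|l|] Hu Hn0 Hn1 Hn2.
-
  have Hf := Hfr _ Hu a erefl.
  have [E1 E2] := @exec_sim k s s' a HR Hf.
  rewrite /stepr; case: ifP => // Hforb Hrun.
  have [f' [t' [Hr Ht]]] := IH _ _ _ _ E2 Hrun.
  exists f'.+2, t'; split=> //.
  rewrite run_S Hb1 /= Hn0 /= /stepr forb_conv Hforb.
  rewrite run_S Hb2 /= Hn1 /=.
  have -> : (3 * i).+2 + 2 = (3 * i.+1).+1 by slia.
  exact: Hr.
-
  have Hf := Hfr _ Hu a erefl.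
  have [E1 E2] := @exec_sim k s s' a HR Hf.
  rewrite /stepr; case: ifP => // Hforb.
  case Er : (exec_basic s a).2 => Hrun.
  + have [f' [t' [Hr Ht]]] := IH _ _ _ _ E2 Hrun.
    exists f'.+2, t'; split=> //.
    rewrite run_S Hb1 /= Hn0 /= /stepr forb_conv Hforb E1 Er.
    rewrite run_S Hb2 /= Hn1 /=.
    have -> : (3 * i).+2 + 2 = (3 * i.+1).+1 by slia.
    exact: Hr.
  + have [f' [t' [Hr Ht]]] := IH i.+2 _ _ _ E2 Hrun.
    exists f'.+2, t'; split=> //.
    rewrite run_S Hb1 /= Hn0 /= /stepr forb_conv Hforb E1 Er.
    rewrite run_S Hb3 /= Hn2 /=.
    have -> : (3 * i).+3 + 4 = (3 * i.+2).+1 by slia.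
    exact: Hr.
-
  have Hf := Hfr _ Hu a erefl.
  have [E1 E2] := @exec_sim k s s' a HR Hf.
  rewrite /stepr; case: ifP => // Hforb.
  case Er : (exec_basic s a).2 => Hrun.
  + have [f' [t' [Hr Ht]]] := IH i.+2 _ _ _ E2 Hrun.
    exists f'.+2, t'; split=> //.
    rewrite run_S Hb1 /= Hn0 /= /stepr forb_conv Hforb E1 Er.
    rewrite run_S Hb3 /= Hn2 /=.
    have -> : (3 * i).+3 + 4 = (3 * i.+2).+1 by slia.
    exact: Hr.
  + have [f' [t' [Hr Ht]]] := IH _ _ _ _ E2 Hrun.
    exists f'.+2, t'; split=> //.
    rewrite run_S Hb1 /= Hn0 /= /stepr forb_conv Hforb E1 Er.
    rewrite run_S Hb2 /= Hn1 /=.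
    have -> : (3 * i).+2 + 2 = (3 * i.+1).+1 by slia.
    exact: Hr.
-
  clear Hn1 Hn2 Hu; case: l Hn0 => [|l] Hn0 //= Hrun.
  rewrite addSn in Hrun.
  have [f' [t' [Hr Ht]]] := IH _ _ _ _ HR Hrun.
  exists f'.+1, t'; split=> //.
  rewrite run_S Hb1 /= Hn0 /=.
  have -> : (3 * i).+1 + 3 * l.+1 = (3 * (i + l.+1)).+1 by slia.
  exact: Hr.
-
  case=> <-{t}.
  case: HR => [H1 [H2 [H3 H4]]].
  rewrite /= in Hn0 Hn1 Hn2.
  case Ek : (raux s' k).
  + exists 3, (write s' FOut true); split; last by rewrite /= -H3.
    rewrite run_S Hb1 Hn0 /stepr; cbn -[run]; rewrite Ek.
    rewrite run_S Hb2 Hn1 /stepr; cbn -[run].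
    by rewrite run_S Hb3 Hn2.
  + exists 2, s'; split; last by rewrite H4 -H3.
    rewrite run_S Hb1 Hn0 /stepr; cbn -[run]; rewrite Ek.
    by rewrite run_S Hb3 Hn2.
Qed.

Lemma in_trans k X u : u \in trans k X -> exists2 v, v \in X & u \in block k v.
Proof. by move=> /flattenP [bl /mapP [v Hv ->] Hu]; exists v. Qed.

Theorem theorem4 :
  exists c : nat,
    forall (n : nat) (f : n.-tuple bool -> bool) (X : iseq),
      IS_br X -> computes X f ->
      exists Y : iseq,
        IS_br Y /\ no_out_setF Y /\ computes Y f /\ size Y <= c * size X.
Proof.
exists 3 => n f X [HX0 HXb] HXc.
set k := (auxmax X).+1.
exists (trans k X); split; [split|split; [|split]].
- by rewrite size_trans; slia.
- move=> u /in_trans [v Hv Hu] a Ha.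
  have Hbr : forall b, instr_basic v = Some b -> br_basic (conv k b).
    move=> b Hb; have := HXb v Hv b Hb.
    by case: b {Hb} => [[j|j|] [m|]].
  move: Hu; case: v Hv Hbr => [b|b|b|l|] Hv Hbr;
    rewrite /block !inE => /orP [/eqP Eu|/orP [/eqP Eu|/eqP Eu]]; subst u;
    move: Ha => /= Ha; try discriminate; case: Ha => <- //; exact: Hbr.
- move=> u /in_trans [v Hv Hu].
  move: Hu; case: v Hv => [b|b|b|l|] Hv;
    rewrite /block !inE => /orP [/eqP Eu|/orP [/eqP Eu|/eqP Eu]]; subst u => //=;
    case: b {Hv} => [[j|j|] m] //.
- move=> b; have [fuel [s [Hr Hs]]] := HXc b.
  have HR : Rel k (init_regs b) (init_regs b) by [].
  have [f' [t' [Hr' Ht']]] := @sim n X k fuel (@fresh_auxmax X) 0 _ _ _ HR Hr.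
  by exists f', t'; rewrite Ht' Hs.
- by rewrite size_trans.
Qed.
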